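(* The metric $AWRF$ does not have a deepness threshold and does not satisfy sensitivity.
   Context: A population is a finite set $\mathcal{D}$ of candidates partitioned into two nonempty groups, a non-protected group $G_0$ and a protected group $G_1$; each candidate $d$ has a relevance score $y(d)\in\mathbb R$; uniform relevance means $y(d)=1$ for all $d\in\mathcal D$. Let $p_G=|G|/|\mathcal D|$ and $p_{\mathrm{groups}}=(p_{G_0},p_{G_1})$. For a candidate set $D\subseteq\mathcal D$ with $n=|D|$, a ranking is a bijection $r:\{1,\dots,n\}\to D$ and $r^{-1}(d)$ is the position of $d$. $\mathcal R_{\mathrm{first}}(D)$ ($\mathcal R_{\mathrm{last}}(D)$) is the set of rankings of $D$ in which every candidate of $G_1\cap D$ is ranked above (below) every candidate of $G_0\cap D$. Position bias $b(k)=1/\log_2(k+1)$. $AWRF$: $p_{\mathrm{Exp}}(r)=\frac{1}{\sum_{k=1}^n b(k)}\left(\sum_{d\in G_0\cap D} b(r^{-1}(d)),\ \sum_{d\in G_1\cap D} b(r^{-1}(d))\right)$, $p_{\mathrm{sum}}(r)=\frac12(p_{\mathrm{Exp}}(r)+p_{\mathrm{groups}})$, $\Delta_{KL}(p\|q)=\sum_i p_i\log_2(p_i/q_i)$ (with $0\log 0=0$), $AWRF(r)=1-\left[\frac12\Delta_{KL}(p_{\mathrm{Exp}}(r)\|p_{\mathrm{sum}}(r))+\frac12\Delta_{KL}(p_{\mathrm{groups}}\|p_{\mathrm{sum}}(r))\right]$. Deepness threshold: $m$ has one if there exists $N'\in\mathbb N$ such that for every population $\mathcal D$ with uniform relevance,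 all $N\ge N'$, all $D_N,D_N'\subsetneq\mathcal D$ with $|D_N|=|D_N'|=2N$, $|D_N\cap G_1|=1$, $|D_N'\cap G_1|=N$, and all $r\in\mathcal R_{\mathrm{first}}(D_N)$, $r'\in\mathcal R_{\mathrm{last}}(D_N')$: $m(r)<m(r')$. Sensitivity: $m$ satisfies it if for every population $\mathcal D$ with uniform relevance, every $D\subsetneq\mathcal D$ with $|D|=n$, every ranking $r$ of $D$ and every $d'\in G_0\setminus D$, the ranking $r'=\langle r(1),\dots,r(n),d'\rangle$ satisfies $m(r')<m(r)$. *)

(* Defs.v *)
From mathcomp Require Import all_boot.
From Stdlib Require Import Reals.

Set Implicit Arguments.
Unset Strict Implicit.
Unset Printing Implicit Defensive.

(* A population: a finite type T; [g x = true] iff x is in the protected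
   group G1, [g x = false] iff x is in the non-protected group G0. Relevance is uniform (y = 1) and
   AWRF does not depend on relevance, so it is not represented. *)
Definition population_ok (T : finType) (g : T -> bool) : Prop :=
  (exists x, g x) /\ (exists x, ~~ g x).

(* A ranking of D is a duplicate-free sequence enumerating exactly D;
   the candidate at index i (0-based) is at position i+1. *)
Definition ranking_of (T : finType) (D : {set T}) (s : seq T) : Prop :=
  uniq s /\ (forall x, (x \in s) = (x \in D)).

Definition pos (T : finType) (s : seq T) (x : T) : nat := (index x s).+1.

Definition R_first (T : finType) (g : T -> bool) (D : {set T}) (s : seq T) : Prop :=
  ranking_of D s /\
  (forall x y, x \in s -> y \in s -> g x -> ~~ g y -> (pos s x < pos s y)%N).

Definition R_last (T : finType) (g : T -> bool) (D : {set T}) (s : seq T) : Prop :=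
  ranking_of D s /\
  (forall x y, x \in s -> y \in s -> g x -> ~~ g y -> (pos s y < pos s x)%N).

Definition log2 (x : R) : R := (ln x / ln 2)%R.

Definition bias (k : nat) : R := (1 / log2 (INR k + 1))%R.

Fixpoint expo (T : Type) (P : T -> bool) (s : seq T) (k : nat) : R :=
  match s with
  | [::] => 0%R
  | x :: s' => ((if P x then bias k else 0) + expo P s' k.+1)%R
  end.

Definition kl_term (p q : R) : R :=
  if Req_EM_T p 0 then 0%R else (p * log2 (p / q))%R.

Definition KL2 (p0 p1 q0 q1 : R) : R := (kl_term p0 q0 + kl_term p1 q1)%R.

Definition metric := forall (T : finType) (g : T -> bool), seq T -> R.

Definition AWRF : metric := fun T g s =>
  let Z := expo (fun _ => true) s 1 in
  let e0 := (expo (fun x => ~~ g x) s 1 / Z)%R in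
  let e1 := (expo g s 1 / Z)%R in
  let pg0 := (INR #|[set x | ~~ g x]| / INR #|T|)%R in
  let pg1 := (INR #|[set x | g x]| / INR #|T|)%R in
  let q0 := ((e0 + pg0) / 2)%R in
  let q1 := ((e1 + pg1) / 2)%R in
  (1 - (/2 * KL2 e0 e1 q0 q1 + /2 * KL2 pg0 pg1 q0 q1))%R.

Definition has_deepness_threshold (m : metric) : Prop :=
  exists N' : nat,
    forall (T : finType) (g : T -> bool), population_ok g ->
    forall N : nat, (N' <= N)%N ->
    forall (DN DN' : {set T}),
      DN \proper [set: T] -> DN' \proper [set: T] ->
      #|DN| = (2 * N)%N -> #|DN'| = (2 * N)%N ->
      #|DN :&: [set x | g x]| = 1%N -> #|DN' :&: [set x | g x]| = N ->
      forall r r' : seq T, R_first g DN r -> R_last g DN' r' ->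
      (m T g r < m T g r')%R.

Definition sensitivity (m : metric) : Prop :=
  forall (T : finType) (g : T -> bool), population_ok g ->
  forall (D : {set T}), D \proper [set: T] -> (0 < #|D|)%N ->
  forall r : seq T, ranking_of D r ->
  forall d' : T, ~~ g d' -> d' \notin D ->
  (m T g (rcons r d') < m T g r)%R.

(* Main.v *)
Require Import Defs.
From mathcomp Require Import all_boot.
From Stdlib Require Import Reals.
From mathcomp Require Import zify.
From Stdlib Require Import Lra.
Open Scope R_scope.

Lemma ln_ge (t : R) : 0 < t -> 1 - / t <= ln t.
Proof.
move=> ht. have h := exp_ineq1_le (ln (/ t)).
rewrite exp_ln in h; last by apply Rinv_0_lt_compat.
rewrite ln_Rinv in h; lra.
Qed.

Lemma ln_le1 (t : R) : 0 < t -> ln t <= t - 1.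
Proof. move=> ht. have h := exp_ineq1_le (ln t). rewrite exp_ln in h; lra. Qed.

Lemma ln2_pos : 0 < ln 2.
Proof. have := ln_lt_2; lra. Qed.

Definition phi (p q : R) := p * ln (2*p/(p+q)) + q * ln (2*q/(p+q)).

Lemma ln_divR a b : 0 < a -> 0 < b -> ln (a / b) = ln a - ln b.
Proof.
move=> ha hb. have hb' : 0 < / b by apply Rinv_0_lt_compat.
rewrite /Rdiv (ln_mult _ _ ha hb') (ln_Rinv _ hb); lra.
Qed.

Lemma phi_mono1 q x y : 0 < q -> q <= x -> x <= y -> phi x q <= phi y q.
Proof.
move=> hq hqx hxy. rewrite /phi.
set a := ln (2*y/(y+q)). set b := ln (2*x/(x+q)).
set c := ln (2*q/(y+q)). set d := ln (2*q/(x+q)).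
have ha : 1 - (y+q)/(2*y) <= a.
  have := ln_ge (2*y/(y+q)) ltac:(apply Rdiv_lt_0_compat; lra).
  by replace (/ (2*y/(y+q))) with ((y+q)/(2*y)) by (field; lra).
have hab : 1 - x*(y+q)/(y*(x+q)) <= a - b.
  rewrite /a /b -ln_divR; try (apply Rdiv_lt_0_compat; lra).
  have := ln_ge ((2 * y / (y + q)) / (2 * x / (x + q)))
     ltac:(apply Rdiv_lt_0_compat; apply Rdiv_lt_0_compat; lra).
  by replace (/ ((2 * y / (y + q)) / (2 * x / (x + q)))) with (x*(y+q)/(y*(x+q))) by (field; lra).
have hcd : 1 - (y+q)/(x+q) <= c - d.
  rewrite /c /d -ln_divR; try (apply Rdiv_lt_0_compat; lra).
  have := ln_ge ((2 * q / (y + q)) / (2 * q / (x + q)))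
     ltac:(apply Rdiv_lt_0_compat; apply Rdiv_lt_0_compat; lra).
  by replace (/ ((2 * q / (y + q)) / (2 * q / (x + q)))) with ((y+q)/(x+q)) by (field; lra).
have hpoly : (y-x)*(1 - (y+q)/(2*y)) + x*(1 - x*(y+q)/(y*(x+q))) + q*(1 - (y+q)/(x+q))
   = (y-x)*(x-q)*(y+q)/(2*y*(x+q)) by field; lra.
have hpos : 0 <= (y-x)*(x-q)*(y+q)/(2*y*(x+q)).
  apply Rmult_le_pos; last by (apply Rlt_le, Rinv_0_lt_compat; nra).
  apply Rmult_le_pos; [apply Rmult_le_pos|]; lra.
have h1 := Rmult_le_compat_l (y-x) _ _ ltac:(lra) ha.
have h2 := Rmult_le_compat_l x _ _ ltac:(lra) hab.
have h3 := Rmult_le_compat_l q _ _ ltac:(lra) hcd.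
nra.
Qed.

Lemma phi_mono0 Q u v : 0 < u -> u <= v -> v <= Q -> phi v Q <= phi u Q.
Proof.
move=> hu huv hvQ. rewrite /phi.
set a := ln (2*v/(v+Q)). set b := ln (2*u/(u+Q)).
set c := ln (2*Q/(v+Q)). set d := ln (2*Q/(u+Q)).
have ha : a <= 0.
  have := ln_le1 (2*v/(v+Q)) ltac:(apply Rdiv_lt_0_compat; lra).
  have : 2*v/(v+Q) <= 1.
    apply (Rmult_le_reg_r (v+Q)); first lra.
    by rewrite /Rdiv Rmult_assoc Rinv_l; lra.
  rewrite /a; lra.
have hba : 1 - v*(u+Q)/(u*(v+Q)) <= b - a.
  rewrite /a /b -ln_divR; try (apply Rdiv_lt_0_compat; lra).
  have := ln_ge ((2 * u / (u + Q)) / (2 * v / (v + Q)))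
     ltac:(apply Rdiv_lt_0_compat; apply Rdiv_lt_0_compat; lra).
  by replace (/ ((2 * u / (u + Q)) / (2 * v / (v + Q)))) with (v*(u+Q)/(u*(v+Q))) by (field; lra).
have hdc : 1 - (u+Q)/(v+Q) <= d - c.
  rewrite /c /d -ln_divR; try (apply Rdiv_lt_0_compat; lra).
  have := ln_ge ((2 * Q / (u + Q)) / (2 * Q / (v + Q)))
     ltac:(apply Rdiv_lt_0_compat; apply Rdiv_lt_0_compat; lra).
  by replace (/ ((2 * Q / (u + Q)) / (2 * Q / (v + Q)))) with ((u+Q)/(v+Q)) by (field; lra).
have hpoly : u*(1 - v*(u+Q)/(u*(v+Q))) + Q*(1 - (u+Q)/(v+Q)) = 0 by field; lra.
have h1 := Rmult_le_compat_l (v-u) _ _ ltac:(lra) ha.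
have h2 := Rmult_le_compat_l u _ _ ltac:(lra) hba.
have h3 := Rmult_le_compat_l Q _ _ ltac:(lra) hdc.
nra.
Qed.

Definition awrf_val (e0 e1 pg0 pg1 : R) : R :=
  let q0 := ((e0 + pg0) / 2)%R in
  let q1 := ((e1 + pg1) / 2)%R in
  (1 - (/2 * KL2 e0 e1 q0 q1 + /2 * KL2 pg0 pg1 q0 q1))%R.

Lemma AWRF_val (T : finType) (g : T -> bool) (s : seq T) : @AWRF T g s =
  awrf_val (expo (fun x => ~~ g x) s 1 / expo (fun _ => true) s 1)
           (expo g s 1 / expo (fun _ => true) s 1)
           (INR #|[set x | ~~ g x]| / INR #|T|) (INR #|[set x | g x]| / INR #|T|).
Proof. by []. Qed.

Lemma kl_term_pos p q : 0 < p -> 0 < q ->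
  kl_term p ((p + q)/2) = p * ln (2*p/(p+q)) / ln 2.
Proof.
move=> hp hq. rewrite /kl_term. destruct Req_EM_T; first lra.
rewrite /log2. replace (p / ((p+q)/2)) with (2*p/(p+q)) by (field; lra).
rewrite /=; field; have := ln2_pos; lra.
Qed.

Lemma kl_term_pos' p q : 0 < p -> 0 < q ->
  kl_term q ((p + q)/2) = q * ln (2*q/(p+q)) / ln 2.
Proof.
move=> hp hq. rewrite /kl_term. destruct Req_EM_T; first lra.
rewrite /log2. replace (q / ((p+q)/2)) with (2*q/(p+q)) by (field; lra).
rewrite /=; field; have := ln2_pos; lra.
Qed.

Lemma awrf_phi e0 e1 pg0 pg1 : 0 < e0 -> 0 < e1 -> 0 < pg0 -> 0 < pg1 ->
  awrf_val e0 e1 pg0 pg1 = 1 - (phi e0 pg0 + phi e1 pg1) / (2 * ln 2).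
Proof.
move=> h0 h1 h2 h3. rewrite /awrf_val /KL2 /phi.
rewrite !kl_term_pos // !kl_term_pos' //.
rewrite /=; field; have := ln2_pos; lra.
Qed.

Lemma awrf_le e0 e1 e0' e1' pg0 pg1 :
  0 < pg1 -> pg1 <= e1 -> e1 <= e1' -> 0 < e0' -> e0' <= e0 -> e0 <= pg0 ->
  awrf_val e0' e1' pg0 pg1 <= awrf_val e0 e1 pg0 pg1.
Proof.
move=> *. rewrite !awrf_phi; try lra.
have := phi_mono1 pg1 e1 e1'; have := phi_mono0 pg0 e0' e0.
have := ln2_pos => *.
apply Rplus_le_compat_l, Ropp_le_contravar.
apply Rmult_le_compat_r; first by apply Rlt_le, Rinv_0_lt_compat; lra.
have := phi_mono1 pg1 e1 e1'; have := phi_mono0 pg0 e0' e0. lra.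
Qed.
Set Implicit Arguments.
Unset Strict Implicit.

Lemma expo_split (T : Type) (P : T -> bool) s k :
  expo P s k + expo (fun x => ~~ P x) s k = expo (fun _ => true) s k.
Proof.
elim: s k => [|x s IH] k /=; first lra.
rewrite -(IH k.+1). case: (P x) => /=; lra.
Qed.

Lemma expo_cat (T : Type) (P : T -> bool) s1 s2 k :
  expo P (s1 ++ s2) k = expo P s1 k + expo P s2 (k + size s1).
Proof.
elim: s1 k => [|x s IH] k /=; first by rewrite addn0; lra.
rewrite IH addSnnS; lra.
Qed.

Lemma expo_all (T : Type) (P : T -> bool) s k :
  all P s -> expo P s k = expo (fun _ => true) s k.
Proof.
elim: s k => [|x s IH] k //= /andP [-> hs]. by rewrite IH.
Qed.

Lemma expo_none (T : Type) (P : T -> bool) s k :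
  all (fun x => ~~ P x) s -> expo P s k = 0.
Proof.
elim: s k => [|x s IH] k //= /andP [hx hs]. rewrite (negbTE hx) IH //; lra.
Qed.

Lemma expo_size (T U : Type) (s : seq T) (t : seq U) k :
  size s = size t -> expo (fun _ => true) s k = expo (fun _ => true) t k.
Proof.
elim: s t k => [|x s IH] [|y t] k //= [h]. by rewrite (IH t).
Qed.

Lemma ln_le a b : 0 < a -> a <= b -> ln a <= ln b.
Proof.
move=> ha hab. case: (Rle_lt_or_eq_dec _ _ hab) => h.
- by apply Rlt_le, ln_increasing.
- by rewrite h; lra.
Qed.

Lemma le_INR' (n m : nat) : (n <= m)%nat -> INR n <= INR m.
Proof. by move=> h; apply le_INR; apply/leP. Qed.

Lemma INR6 : INR 6 = 6.
Proof. simpl; lra. Qed.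

Lemma bias_eq (k : nat) : bias k = ln 2 / ln (INR k + 1).
Proof. rewrite /bias /log2. have := ln2_pos => h.
case: (Req_dec (ln (INR k + 1)) 0) => h0.
- rewrite h0 /Rdiv Rmult_0_l Rinv_0; lra.
- field; lra.
Qed.

Lemma ln_k1 (k : nat) : (1 <= k)%nat -> ln 2 <= ln (INR k + 1).
Proof.
move=> hk. apply ln_le; first lra.
have : INR 1 <= INR k by apply le_INR'.
rewrite /=.
lra.
Qed.

Lemma bias_pos (k : nat) : (1 <= k)%nat -> 0 < bias k.
Proof.
move=> hk. rewrite bias_eq. have := ln_k1 hk. have := ln2_pos => *.
apply Rdiv_lt_0_compat; lra.
Qed.

Lemma bias_le1 (k : nat) : (1 <= k)%nat -> bias k <= 1.
Proof.
move=> hk. rewrite bias_eq. have := ln_k1 hk. have := ln2_pos => *.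
apply (Rmult_le_reg_r (ln (INR k + 1))); first lra.
rewrite /Rdiv Rmult_assoc Rinv_l; lra.
Qed.

Lemma bias1 : bias 1 = 1.
Proof. rewrite bias_eq /=. replace (1 + 1) with 2 by lra. field. have := ln2_pos; lra. Qed.

Lemma pow_bound (m : nat) : (INR (6 + m) + 1) ^ 2 <= 2 ^ (6 + m).
Proof.
elim: m => [|m IH]. { rewrite addn0 /=. lra. }
have step : forall x y, 6 <= x -> (x+1)^2 <= y -> (x+1+1)^2 <= 2*y.
  move=> x y hx hy. simpl in *. nra.
rewrite addnS S_INR.
change (2 ^ (6 + m).+1) with (2 * 2 ^ (6 + m)).
apply step => //.
by rewrite -INR6; apply le_INR'; rewrite leq_addr.
Qed.

Lemma bias_ge (k : nat) : (6 <= k)%nat -> 2 / INR k <= bias k.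
Proof.
move=> hk. rewrite bias_eq.
have hk' : 6 <= INR k by rewrite -INR6; apply le_INR'.
have hl := ln_k1 (leq_trans (isT : (1 <= 6)%nat) hk).
have h2 := ln2_pos.
have key : 2 * ln (INR k + 1) <= INR k * ln 2.
  have ek : k = (6 + (k - 6))%nat by rewrite subnKC.
  have hp : 0 < (INR k + 1) ^ 2 by apply pow_lt; lra.
  have h := pow_bound (k - 6). rewrite -ek in h.
  have := ln_le hp h. rewrite !ln_pow; try lra. simpl. lra.
apply (Rmult_le_reg_r (INR k * ln (INR k + 1))); first nra.
replace (2 / INR k * (INR k * ln (INR k + 1))) with (2 * ln (INR k + 1)) by (field; lra).
replace (ln 2 / ln (INR k + 1) * (INR k * ln (INR k + 1))) with (INR k * ln 2) by (field; lra).
lra.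
Qed.

Lemma expo_lb (T : Type) c (s : seq T) k :
  (forall j, (k <= j)%nat -> (j < k + size s)%nat -> c <= bias j) ->
  INR (size s) * c <= expo (fun _ => true) s k.
Proof.
elim: s k => [|x s IH] k H; first by rewrite /=; lra.
have -> : INR (size (x :: s)) = INR (size s) + 1 by rewrite -S_INR.
rewrite [expo _ _ _]/=.
have h1 := H k (leqnn k) ltac:(by rewrite addnS ltnS leq_addr).
have h2 := IH k.+1 ltac:(move=> j hj1 hj2; apply H; [exact: ltnW| by rewrite addnS -addSn]).
lra.
Qed.

Lemma expo_ub (T : Type) (s : seq T) k : (1 <= k)%nat ->
  expo (fun _ => true) s k <= INR (size s).
Proof.
elim: s k => [|x s IH] k hk; first by rewrite /=; lra.
have -> : INR (size (x :: s)) = INR (size s) + 1 by rewrite -S_INR.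
rewrite [expo _ _ _]/=. have := bias_le1 hk. have := IH k.+1 (ltnW hk). lra.
Qed.

Lemma expo_nn (T : Type) (s : seq T) k : (1 <= k)%nat ->
  0 <= expo (fun _ => true) s k.
Proof.
elim: s k => [|x s IH] k /= hk; first lra.
have := bias_pos hk. have := IH k.+1 (ltnW hk). lra.
Qed.

Lemma expo_pos (T : Type) x (s : seq T) k : (1 <= k)%nat ->
  0 < expo (fun _ => true) (x :: s) k.
Proof.
move=> hk /=. have := bias_pos hk. have := expo_nn s (ltn_trans hk (ltnSn k)). lra.
Qed.

Lemma not_sens : ~ sensitivity AWRF.
Proof.
move=> H.
pose g := fun x : 'I_3 => val x == 0%nat.
pose z := @Ordinal 3 0 isT. pose a := @Ordinal 3 1 isT. pose b := @Ordinal 3 2 isT.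
have pop : population_ok g by split; [exists z | exists a].
have hprop : [set a] \proper [set: 'I_3].
  rewrite properT; apply/eqP => e. have : z \in [set a] by rewrite e inE.
  by rewrite inE.
have hrank : ranking_of [set a] [:: a].
  by split => // x; rewrite !inE.
have hc : (0 < #|[set a]|)%nat by rewrite cards1.
have hn : b \notin [set a] by rewrite inE.
have := H _ g pop [set a] hprop hc [:: a] hrank b isT hn.
rewrite !AWRF_val.
have hb1 := bias_pos (isT : (1 <= 1)%nat).
have hb2 := bias_pos (isT : (1 <= 2)%nat).
have -> : expo (fun x => ~~ g x) (rcons [:: a] b) 1 / expo xpredT (rcons [:: a] b) 1 = 1.
  rewrite /=. field. lra.
have -> : expo g (rcons [:: a] b) 1 / expo xpredT (rcons [:: a] b) 1 = 0.
  rewrite /=. field. lra.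
have -> : expo (fun x => ~~ g x) [:: a] 1 / expo xpredT [:: a] 1 = 1.
  rewrite /=. field. lra.
have -> : expo g [:: a] 1 / expo xpredT [:: a] 1 = 0.
  rewrite /=. field. lra.
lra.
Qed.
Set Implicit Arguments.
Unset Strict Implicit.

Section Mem.
Variable P : nat.
Definition ord (i : nat) : 'I_P.+1 := inord i.

Lemma val_ord i : (i <= P)%nat -> val (ord i) = i.
Proof. by move=> h; apply: inordK. Qed.

Lemma mem_map_ord (l : seq nat) : all (fun i : nat => (i <= P)%nat) l ->
  forall x : 'I_P.+1, (x \in map ord l) = (val x \in l).
Proof.
move=> hl x. apply/mapP/idP.
- move=> [i hi ->]. rewrite val_ord //. by move/allP: hl => /(_ i hi).
- move=> h. exists (val x) => //. by rewrite /ord inord_val.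
Qed.

Lemma uniq_map_ord (l : seq nat) : all (fun i : nat => (i <= P)%nat) l -> uniq l ->
  uniq (map ord l).
Proof.
move=> hl hu. rewrite map_inj_in_uniq // => i j hi hj e.
move/allP: hl => hl.
have := congr1 val e. rewrite !val_ord //; [exact: hl | exact: hl].
Qed.


End Mem.
Set Implicit Arguments.
Unset Strict Implicit.

Lemma nA (N v : nat) : ((v == 0) || (N <= v < N + (2*N-1)))%nat -> (v < N)%nat -> v = 0%nat.
Proof. lia. Qed.
Lemma nB (N v : nat) : ~~ (v < N)%nat -> (0 < N)%nat -> ~~ (0 == v)%nat.
Proof. lia. Qed.
Lemma nC (N v : nat) : (v < N)%nat -> (N <= v < N + N)%nat = false.
Proof. lia. Qed.
Lemma nD (N v : nat) : (v < N + N)%nat -> ~~ (v < N)%nat -> (N <= v < N + N)%nat.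
Proof. lia. Qed.
Lemma nE (N v : nat) : (0 < N)%nat -> ((v == 0) || (N <= v < N + (2*N-1)))%nat && (v < N)%nat = (v == 0)%nat.
Proof. move=> h; apply/idP/idP; lia. Qed.
Lemma nF (N v : nat) : (v < N + N)%nat && (v < N)%nat = (v < N)%nat.
Proof. apply/idP/idP; lia. Qed.

Lemma expo_cons (T : Type) (Q : T -> bool) x s k :
  expo Q (x :: s) k = ((if Q x then bias k else 0) + expo Q s k.+1)%R.
Proof. by []. Qed.

Lemma expo_pos' (T : Type) (s : seq T) k : (1 <= k)%nat -> (0 < size s)%nat ->
  (0 < expo (fun _ => true) s k)%R.
Proof. case: s => // x s hk _. exact: expo_pos. Qed.

Lemma INR2 n : INR (2 * n) = (2 * INR n)%R.
Proof. by rewrite -multE mult_INR. Qed.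

Lemma not_deep : ~ has_deepness_threshold AWRF.
Proof.
move=> [N' H].
pose N := (N' + 5)%nat.
have hN5 : (5 <= N)%nat by rewrite leq_addl.
have hN0 : (0 < N)%nat by rewrite /N addnS.
pose P := (N + 2 * N * N)%nat.
have hP : (3 * N <= P)%nat by rewrite /P; nia.
pose g := fun x : 'I_P.+1 => (val x < N)%nat.
pose l := 0%nat :: iota N (2 * N - 1).
pose l1 := iota N N.
pose l2 := iota 0 N.
pose r := map (ord P) l.
pose s1 := map (ord P) l1.
pose s2 := map (ord P) l2.
pose r' := s1 ++ s2.
have al : all (fun i : nat => (i <= P)%nat) l.
  apply/allP => i; rewrite inE mem_iota => h; lia.
have al1 : all (fun i : nat => (i <= P)%nat) l1.
  apply/allP => i; rewrite mem_iota => h; lia.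
have al2 : all (fun i : nat => (i <= P)%nat) l2.
  apply/allP => i; rewrite mem_iota => h; lia.
have ul : uniq l.
  rewrite /l /= iota_uniq andbT mem_iota; lia.
have ur : uniq r by apply uniq_map_ord.
have us1 : uniq s1 by apply uniq_map_ord => //; apply iota_uniq.
have us2 : uniq s2 by apply uniq_map_ord => //; apply iota_uniq.
have ur' : uniq r'.
  rewrite /r' cat_uniq us1 us2 /= andbT.
  apply/hasPn => x; rewrite (mem_map_ord al2) (mem_map_ord al1) !mem_iota; lia.
have memr x : (x \in r) = (val x \in l) by apply mem_map_ord.
have mems1 x : (x \in s1) = (N <= val x < N + N)%nat by rewrite mem_map_ord // mem_iota.
have mems2 x : (x \in s2) = (val x < N)%nat by rewrite mem_map_ord // mem_iota.
have memr' x : (x \in r') = (val x < N + N)%nat by rewrite mem_cat mems1 mems2; lia.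
have meml x : (val x \in l) = ((val x == 0) || (N <= val x < N + (2 * N - 1)))%nat
  by rewrite inE mem_iota.
have pop : population_ok g.
  split; [exists (ord P 0) | exists (ord P P)]; rewrite /g val_ord //; lia.
have idx (h x : 'I_P.+1) t : index x (h :: t) = if h == x then 0%nat else (index x t).+1 by [].
have prop (A : seq 'I_P.+1) : (A = r \/ A = r') -> [set x in A] \proper [set: 'I_P.+1].
  move=> hA; rewrite properT; apply/eqP => e.
  have : ord P P \in [set x in A] by rewrite e inE.
  rewrite in_set; case: hA => ->; rewrite ?memr ?memr' ?meml val_ord //; lia.
have c1 : #|[set x in r]| = (2 * N)%nat.
  rewrite cardsE; move/card_uniqP: ur => ->; rewrite size_map /= size_iota; lia.
have c2 : #|[set x in r']| = (2 * N)%nat.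
  rewrite cardsE; move/card_uniqP: ur' => ->; rewrite size_cat !size_map !size_iota; lia.
have c3 : #|[set x in r] :&: [set x | g x]| = 1%nat.
  have -> : [set x in r] :&: [set x | g x] = [set ord P 0].
    apply/setP => x; rewrite in_setI !in_set in_set1 memr meml /g -val_eqE val_ord //.
    exact: nE.
  by rewrite cards1.
have cg : [set x | g x] = [set x in s2].
  by apply/setP => x; rewrite !in_set mems2.
have c2' : #|[set x in s2]| = N.
  rewrite cardsE; move/card_uniqP: us2 => ->; rewrite size_map size_iota //.
have c4 : #|[set x in r'] :&: [set x | g x]| = N.
  have -> : [set x in r'] :&: [set x | g x] = [set x in s2].
    apply/setP => x; rewrite in_setI !in_set memr' mems2 /g.
    apply: nF.
  exact: c2'.
have hF : R_first g [set x in r] r.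
  split; first (split; [done | by move=> x; rewrite in_set]).
  move=> x y hx hy gx gy.
  have ex : x = ord P 0.
    apply val_inj; rewrite val_ord //. move: hx gx; rewrite memr meml /g; exact: nA.
  have ey : (ord P 0 == y) = false.
    apply/negbTE; rewrite -val_eqE val_ord //. move: gy; rewrite /g => gy; exact: nB gy hN0.
  rewrite /Defs.pos /r /l map_cons !idx ex eqxx ey //.
have hL : R_last g [set x in r'] r'.
  split; first (split; [done | by move=> x; rewrite in_set]).
  move=> x y hx hy gx gy.
  have x1 : (x \in s1) = false by rewrite mems1; apply: nC gx.
  have y1 : (y \in s1) by rewrite mems1; move: hy; rewrite memr' => hy; exact: nD hy gy.
  rewrite /Defs.pos /r' !index_cat x1 y1.
  have := index_mem y s1. rewrite y1 => hi. rewrite ltnS. exact: (leq_trans hi (leq_addr _ _)).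
have Hlt := H _ g pop N (leq_addr 5 N') _ _ (prop _ (or_introl erefl)) (prop _ (or_intror erefl))
   c1 c2 c3 c4 r r' hF hL.
rewrite !AWRF_val in Hlt.
Open Scope R_scope.
have sr : size r = (2 * N)%nat by rewrite size_map /= size_iota; lia.
have sr' : size r' = (2 * N)%nat by rewrite size_cat !size_map !size_iota; lia.
have ss1 : size s1 = N by rewrite size_map size_iota.
have ss2 : size s2 = N by rewrite size_map size_iota.
set Z := expo (fun _ => true) r 1.
have eZ : expo (fun _ => true) r' 1 = Z by apply expo_size; rewrite sr sr'.
have Zpos : 0 < Z by apply expo_pos' => //; rewrite sr; lia.
have Zub : Z <= 2 * INR N by rewrite -INR2 -sr; apply expo_ub.
have INRN : 1 <= INR N by apply (le_INR' hN0).
have alls1 : all (fun x => ~~ g x) s1.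
  apply/allP => x; rewrite mems1 /g -leqNgt; by case/andP.
have alls2 : all g s2 by apply/allP => x; rewrite mems2.
have alls2' : all (fun x => ~~ ~~ g x) s2 by apply/allP => x; rewrite mems2 negbK.
have alls0 : all (fun x => ~~ g x) (map (ord P) (iota N (2 * N - 1))).
  apply/allP => x; rewrite mem_map_ord; last by apply/allP => i hi; apply: (allP al); rewrite /l inE hi orbT.
  rewrite mem_iota /g -leqNgt; by case/andP.
have e1r : expo g r 1 = 1.
  rewrite /r /l map_cons expo_cons /g val_ord // hN0 bias1 expo_none //; lra.
have e0r : expo (fun x => ~~ g x) r 1 = Z - 1.
  have := expo_split g r 1; rewrite e1r -/Z; lra.
set S := expo (fun _ => true) s2 (1 + size s1).
set A := expo (fun _ => true) s1 1.
have e1r' : expo g r' 1 = S.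
  rewrite /r' expo_cat expo_none // expo_all //; rewrite /S; lra.
have e0r' : expo (fun x => ~~ g x) r' 1 = A.
  rewrite /r' expo_cat (@expo_none _ (fun x => ~~ g x) s2) // expo_all //; rewrite /A; lra.
have ZSA : Z = S + A.
  have := expo_split g r' 1; rewrite e1r' e0r' eZ; lra.
have Apos : 0 < A by apply expo_pos' => //; rewrite ss1.
have S1 : 1 <= S.
  have hb : forall j, (1 + size s1 <= j)%nat -> (j < 1 + size s1 + size s2)%nat -> 1 / INR N <= bias j.
    move=> j hj1 hj2. rewrite ss1 ss2 in hj1 hj2.
    have hj6 : (6 <= j)%nat by apply: leq_trans hj1; rewrite add1n ltnS.
    apply Rle_trans with (2 / INR j); last exact: bias_ge hj6.
    have hjN : INR j <= 2 * INR N.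
      rewrite -INR2; apply le_INR'. by move: hj2; rewrite add1n ltnS mul2n -addnn.
    have hj0 : 6 <= INR j by rewrite -INR6; apply le_INR'.
    apply (Rmult_le_reg_r (INR N * INR j)); first nra.
    replace (1 / INR N * (INR N * INR j)) with (INR j) by (field; lra).
    replace (2 / INR j * (INR N * INR j)) with (2 * INR N) by (field; lra).
    lra.
  have h := expo_lb hb. rewrite ss2 -/S in h.
  replace (INR N * (1 / INR N)) with 1 in h by (field; lra). exact h.
have cT : INR #|'I_P.+1| = INR P.+1 by rewrite card_ord.
have hPb : 2 * INR N * INR N <= INR P.+1.
  rewrite -INR2 -mult_INR multE. apply le_INR'. by rewrite /P ltnW // ltnS leq_addl.
have pg1E : INR #|[set x | g x]| / INR #|'I_P.+1| = INR N / INR P.+1 by rewrite cg c2' cT.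
have pgs : INR #|[set x | ~~ g x]| + INR #|[set x | g x]| = INR #|'I_P.+1|.
  have -> : [set x | ~~ g x] = ~: [set x | g x] by apply/setP => x; rewrite !inE.
  by rewrite -plus_INR plusE addnC cardsC.
have hP0 : 0 < INR P.+1 by apply lt_0_INR; apply/ltP.
have pg0E : INR #|[set x | ~~ g x]| / INR #|'I_P.+1| = 1 - INR N / INR P.+1.
  have -> : INR #|[set x | ~~ g x]| = INR P.+1 - INR N by rewrite cg c2' cT in pgs; lra.
  rewrite cT. field; lra.
rewrite pg1E pg0E e1r e0r eZ e1r' e0r' in Hlt.
have key : awrf_val (A / Z) (S / Z) (1 - INR N / INR P.+1) (INR N / INR P.+1)
   <= awrf_val ((Z - 1) / Z) (1 / Z) (1 - INR N / INR P.+1) (INR N / INR P.+1).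
  have hNP : INR N / INR P.+1 <= 1 / Z.
    apply (Rmult_le_reg_r (INR P.+1 * Z)); first nra.
    replace (INR N / INR P.+1 * (INR P.+1 * Z)) with (INR N * Z) by (field; lra).
    replace (1 / Z * (INR P.+1 * Z)) with (INR P.+1) by (field; lra).
    nra.
  apply awrf_le.
  - apply Rdiv_lt_0_compat; lra.
  - exact hNP.
  - rewrite /Rdiv; apply Rmult_le_compat_r; [apply Rlt_le, Rinv_0_lt_compat|]; lra.
  - apply Rdiv_lt_0_compat; lra.
  - rewrite /Rdiv; apply Rmult_le_compat_r; [apply Rlt_le, Rinv_0_lt_compat|]; lra.
  - replace ((Z - 1) / Z) with (1 - 1 / Z) by (field; lra). lra.
change (expo (fun _ => true) r 1) with Z in Hlt. lra.
Qed.

Theorem theorem10 : ~ has_deepness_threshold AWRF /\ ~ sensitivity AWRF.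
Proof. split; [exact: not_deep | exact: not_sens]. Qed.
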